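(* Let $X\in\mathrm{St}(n,k)$ and $\xi=(\xi_1,\xi_2)\in\mathfrak{so}(n)\times\mathfrak{so}(k)$. The horizontal lift through $q(0)=(I_n,I_k)$ of $\widehat\beta(t)=(\iota_X\circ\pi)(\exp(t\xi))=e^{t\xi_1}Xe^{-t\xi_2}$ is $$q(t)=\exp(t\xi)\exp(-t\xi_{\mathfrak h})=\big(e^{t\xi_1}e^{-t\xi_{1,\mathfrak h}},\,e^{t\xi_2}e^{-t\xi_{2,\mathfrak h}}\big),$$ and it is the solution of $\dot q(t)=d_{(I_n,I_k)}L_{q(t)}\,\mathrm{Ad}_{\exp(t\xi_{\mathfrak h})}(\xi_{\mathfrak p})$, $q(0)=(I_n,I_k)$.
   Context: $\mathrm{St}(n,k)=\{Y\in\mathbb{R}^{n\times k}:Y^\top Y=I_k\}$; $G=O(n)\times O(k)$ acts by $(R,\theta)\cdot Y=RY\theta^\top$, $H$ is the stabilizer of $X$, $\pi\colon G\to G/H$, $\iota_X((R,\theta)H)=RX\theta^\top$. On $\mathfrak g=\mathfrak{so}(n)\times\mathfrak{so}(k)$ the scalar product is $\langle(\Omega_1,\Psi_1),(\Omega_2,\Psi_2)\rangle=-\operatorname{tr}(\Omega_1\Omega_2)+2\operatorname{tr}(\Psi_1\Psi_2)$; $\mathfrak h=\{(\Omega,\eta):\Omega X=X\eta\}$, $\mathfrak p=\mathfrak h^\perp$, $\mathfrak g=\mathfrak h\oplus\mathfrak p$, and $\xi_{\mathfrak h}=(\xi_{1,\mathfrak h},\xi_{2,\mathfrak h})$, $\xi_{\mathfrak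 p}$ are the components of $\xi$. A horizontal lift of $\widehat\beta$ is a curve $q$ in $G$ with $(\iota_X\circ\pi)(q(t))=\widehat\beta(t)$ and $q(t)^{-1}\dot q(t)\in\mathfrak p$. *)

(* Defs.v *)
From HB Require Import structures.
From mathcomp Require Import all_boot all_order all_algebra.
From mathcomp Require Import all_classical all_reals all_analysis.
Set Implicit Arguments. Unset Strict Implicit. Unset Printing Implicit Defensive.
Import Order.TTheory GRing.Theory Num.Theory.
Import numFieldNormedType.Exports.
Local Open Scope ring_scope.

Section Defs.
Variable R : realType.

Definition expm (n : nat) (A : 'M[R]_n) : 'M[R]_n :=
  limn (series (fun k : nat => (k`!%:R)^-1 *: (A ^+ k))).

Definition skew_sym (n : nat) (A : 'M[R]_n) : Prop := A^T = - A.

Definition orth (n : nat) (M : 'M[R]_n) : Prop := M^T *m M = 1%:M.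

Definition stiefel (n k : nat) (Y : 'M[R]_(n, k)) : Prop := Y^T *m Y = 1%:M.

Definition gip (n k : nat) (O1 : 'M[R]_n) (P1 : 'M[R]_k) (O2 : 'M[R]_n) (P2 : 'M[R]_k) : R :=
  - \tr (O1 *m O2) + 2 * \tr (P1 *m P2).

Definition in_g (n k : nat) (O : 'M[R]_n) (P : 'M[R]_k) : Prop := skew_sym O /\ skew_sym P.

(* h = Lie algebra of the stabilizer H of X *)
Definition in_h (n k : nat) (X : 'M[R]_(n, k)) (O : 'M[R]_n) (P : 'M[R]_k) : Prop :=
  in_g O P /\ O *m X = X *m P.

Definition in_p (n k : nat) (X : 'M[R]_(n, k)) (O : 'M[R]_n) (P : 'M[R]_k) : Prop :=
  in_g O P /\ forall (O' : 'M[R]_n) (P' : 'M[R]_k), in_h X O' P' -> gip O P O' P' = 0.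

Definition iotaX (n k : nat) (X : 'M[R]_(n, k)) (Q : 'M[R]_n) (T : 'M[R]_k) : 'M[R]_(n, k) :=
  Q *m X *m T^T.

Definition Adm (n : nat) (g A : 'M[R]_n) : 'M[R]_n := g *m A *m invmx g.

Definition horizontal_lift (n k : nat) (X : 'M[R]_(n, k)) (bhat : R -> 'M[R]_(n, k))
    (q1 : R -> 'M[R]_n) (q2 : R -> 'M[R]_k) : Prop :=
  (forall t, orth (q1 t) /\ orth (q2 t)) /\
  (forall t, iotaX X (q1 t) (q2 t) = bhat t) /\
  (forall t, derivable q1 t 1 /\ derivable q2 t 1) /\
  (forall t, in_p X (invmx (q1 t) *m derive1 q1 t) (invmx (q2 t) *m derive1 q2 t)).

End Defs.

(* Main.v *)
Require Import Defs.
From HB Require Import structures.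
From mathcomp Require Import all_boot all_order all_algebra.
From mathcomp Require Import all_classical all_reals all_analysis.
From mathcomp Require Import ring lra.
Import Order.TTheory GRing.Theory Num.Theory.
Import numFieldNormedType.Exports.
Local Open Scope ring_scope.

Section MX.
Set Implicit Arguments. Unset Strict Implicit. Unset Printing Implicit Defensive.
Local Open Scope classical_set_scope.
Variable R : realType.

Lemma cvg_sumR {T} (F : set_system T) {FF: Filter F} (I : Type) (r : seq I)
  (f : I -> T -> R) (a : I -> R) :
 (forall i, f i x @[x --> F] --> a i) ->
 (\sum_(i <- r) f i x) @[x --> F] --> \sum_(i <- r) a i.
Proof.
move=> H; elim: r => [|i r IH].
  under eq_cvg do rewrite big_nil.
  rewrite big_nil; exact: cvg_cst.
under eq_cvg do rewrite big_cons.
rewrite big_cons; exact: cvgD.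
Qed.

Lemma mx_cvg_entries {T} (F : set_system T) {FF : Filter F} m n
  (u : T -> 'M[R]_(m,n)) (L : 'M[R]_(m,n)) :
  (forall i j, (fun x => u x i j) @ F --> L i j) -> u @ F --> L.
Proof.
move=> H; apply/cvgrPdist_le => e e0.
near=> x.
rewrite /Num.Def.normr/= mx_normrE (bigmax_le _ (ltW e0))//= => ij _.
rewrite !mxE/=.
move: ij; near: x; apply: filter_forall => -[i j] /=.
exact: ((cvgrPdist_le _ _).1 (H i j)) e e0.
Unshelve. all: by end_near. Qed.

Lemma mx_cvg_entry {T} (F : set_system T) {FF : Filter F} m n
  (u : T -> 'M[R]_(m,n)) (L : 'M[R]_(m,n)) i j :
  u @ F --> L -> (fun x => u x i j) @ F --> L i j.
Proof.
move=> H; exact: (@continuous_cvg _ _ _ F _ u (fun M : 'M[R]_(m,n) => M i j) L (@coord_continuous R m n i j L) H).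
Qed.


Lemma mx_cvg_mulr {T} (F : set_system T) {FF : Filter F} m p n
  (u : T -> 'M[R]_(m,p)) (L : 'M[R]_(m,p)) (X : 'M[R]_(p,n)) :
  u @ F --> L -> (fun x => u x *m X) @ F --> L *m X.
Proof.
move=> H; apply: mx_cvg_entries => i j.
under eq_cvg do rewrite mxE.
rewrite mxE; apply: cvg_sumR => l.
by apply: cvgMl; apply: mx_cvg_entry.
Qed.

Lemma mx_cvg_mull {T} (F : set_system T) {FF : Filter F} m p n
  (u : T -> 'M[R]_(p,n)) (L : 'M[R]_(p,n)) (X : 'M[R]_(m,p)) :
  u @ F --> L -> (fun x => X *m u x) @ F --> X *m L.
Proof.
move=> H; apply: mx_cvg_entries => i j.
under eq_cvg do rewrite mxE.
rewrite mxE; apply: cvg_sumR => l.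
by apply: cvgMr; apply: mx_cvg_entry.
Qed.

Lemma entry_le_norm m n (A : 'M[R]_(m,n)) i j : `|A i j| <= `|A|.
Proof.
rewrite [leRHS]/Num.Def.normr/= mx_normrE.
exact: (le_bigmax _ (fun ij : 'I_m * 'I_n => `|A ij.1 ij.2|) (i, j)).
Qed.

Lemma mxpow_bound n (A : 'M[R]_n) k i j :
  `|(A ^+ k) i j| <= (n%:R * `|A|) ^+ k.
Proof.
elim: k i j => [|k IH] i j.
  rewrite !expr0 mxE; case: (i == j); rewrite /= ?normr1 ?normr0 //.
rewrite exprS -mulmxE mxE exprS.
apply: le_trans (ler_norm_sum _ _ _) _.
rewrite -mulrA mulr_natl.
rewrite (_ : _ *+ n = \sum_(l < n) (`|A| * (n%:R * `|A|) ^+ k)); last by rewrite sumr_const card_ord.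
apply: ler_sum => l _; rewrite normrM; apply: ler_pM => //.
exact: entry_le_norm.
Qed.

Definition dom (c : nat -> R) a C := forall k, `|c k| <= a * (C ^+ k / k`!%:R).

Lemma dom_cvg c a C : 0 <= C -> dom c a C -> forall x, cvgn (pseries c x).
Proof.
move=> C0 Hc x.
have a0 : 0 <= a.
  by have := Hc 0%N; rewrite expr0 fact0 divr1 mulr1; apply: le_trans.
apply: normed_cvg.
apply: (@series_le_cvg R _ (fun k => a * exp_coeff (C * `|x|) k)).
- by move=> k /=; exact: normr_ge0.
- by move=> k; apply: mulr_ge0 => //; apply: exp_coeff_ge0; apply: mulr_ge0.
- move=> k /=; rewrite /exp_coeff /= normrM normrX exprMn.
  rewrite (_ : a * _ = a * (C ^+ k / k`!%:R) * `|x| ^+ k); last by ring.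
  by apply: ler_wpM2r; [exact: exprn_ge0|exact: Hc].
- exact: (@is_cvg_seriesZ R (exp_coeff (C * `|x|)) a (is_cvg_series_exp_coeff _)).
Qed.

Lemma dom_abs c a C : dom c a C -> dom (fun k => `|c k|) a C.
Proof. by move=> H k; rewrite normr_id. Qed.

Lemma dom_diffs c a C : 0 <= C -> dom c a C -> dom (pseries_diffs c) (a * C) C.
Proof.
move=> C0 H k; rewrite /pseries_diffs normrM ger0_norm //.
apply: le_trans (ler_wpM2l _ (H k.+1)) _ => //.
rewrite factS natrM invfM exprS.
have nz : k.+1%:R != 0 :> R by rewrite pnatr_eq0.
rewrite le_eqVlt; apply/orP; left; apply/eqP.
field.
by rewrite pnatr_eq0 -lt0n fact_gt0 /= addrC natr1 pnatr_eq0.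
Qed.

End MX.

Section EXP.
Set Implicit Arguments. Unset Strict Implicit. Unset Printing Implicit Defensive.
Local Open Scope classical_set_scope.
Variable R : realType.

Definition ec n (A : 'M[R]_n) i j (k : nat) : R := (k`!%:R)^-1 * (A ^+ k) i j.

Lemma ec_dom n (A : 'M[R]_n) i j : dom (ec A i j) 1 (n%:R * `|A|).
Proof.
move=> k; rewrite /ec mul1r normrM ger0_norm ?invr_ge0 // mulrC.
by apply: ler_wpM2r; [rewrite invr_ge0|exact: mxpow_bound].
Qed.

Lemma ecC n (A : 'M[R]_n) : 0 <= n%:R * `|A|.
Proof. by apply: mulr_ge0. Qed.

Lemma expm_cvg n (B : 'M[R]_n) :
  series (fun k => (k`!%:R)^-1 *: (B ^+ k)) @ \oo -->
  \matrix_(i, j) limn (pseries (ec B i j) 1).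
Proof.
apply: mx_cvg_entries => i j; rewrite mxE.
have -> : (fun N => series (fun k => (k`!%:R)^-1 *: (B ^+ k)) N i j)
          = pseries (ec B i j) 1.
  apply/funext => N; rewrite /series /= summxE; apply: eq_bigr => k _.
  by rewrite /= mxE expr1n mulr1.
exact: (dom_cvg (ecC B) (ec_dom B i j)).
Qed.

Lemma expmE n (B : 'M[R]_n) :
  expm B = \matrix_(i, j) limn (pseries (ec B i j) 1).
Proof. by apply: cvg_lim => //; exact: expm_cvg. Qed.

Lemma expm_cvgT n (B : 'M[R]_n) :
  series (fun k => (k`!%:R)^-1 *: (B ^+ k)) @ \oo --> expm B.
Proof. by rewrite expmE; exact: expm_cvg. Qed.

Lemma mxZX n (t : R) (A : 'M[R]_n) k : (t *: A) ^+ k = t ^+ k *: A ^+ k.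
Proof.
elim: k => [|k IH]; first by rewrite !expr0 scale1r.
by rewrite !exprS IH -!mulmxE -scalemxAl -scalemxAr scalerA.
Qed.

Lemma expm_entry n (A : 'M[R]_n) (t : R) i j :
  expm (t *: A) i j = limn (pseries (ec A i j) t).
Proof.
rewrite expmE mxE; suff -> : pseries (ec (t *: A) i j) 1 = pseries (ec A i j) t by [].
apply/funext => N.
rewrite /pseries /series /=; apply: eq_bigr => k _.
by rewrite /ec expr1n mulr1 mxZX mxE; ring.
Qed.

Lemma expm0 n : expm (0 : 'M[R]_n) = 1%:M.
Proof.
apply: lim_near_cst => //.
near=> m; rewrite -[m]prednK; last by near: m.
rewrite /series /= big_nat_recl // big1 ?addr0.
  by rewrite expr0 fact0 invr1 scale1r.
by move=> i _; rewrite expr0n /= scaler0.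
Unshelve. all: by end_near. Qed.

End EXP.

Section EXP2.
Set Implicit Arguments. Unset Strict Implicit. Unset Printing Implicit Defensive.
Local Open Scope classical_set_scope.
Variable R : realType.

Lemma mxX_comm m n (A : 'M[R]_m) (B : 'M[R]_n) (X : 'M[R]_(m,n)) k :
  A *m X = X *m B -> A ^+ k *m X = X *m B ^+ k.
Proof.
move=> H; elim: k => [|k IH]; first by rewrite !expr0 mul1mx mulmx1.
by rewrite !exprS -!mulmxE -mulmxA IH mulmxA H -mulmxA.
Qed.

Lemma expm_comm m n (A : 'M[R]_m) (B : 'M[R]_n) X :
  A *m X = X *m B -> expm A *m X = X *m expm B.
Proof.
move=> H.
have h1 : (fun N => series (fun k => (k`!%:R)^-1 *: (A ^+ k)) N *m X) @ \oo
    --> expm A *m X by apply: mx_cvg_mulr; exact: expm_cvgT.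
have h2 : (fun N => X *m series (fun k => (k`!%:R)^-1 *: (B ^+ k)) N) @ \oo
    --> X *m expm B by apply: mx_cvg_mull; exact: expm_cvgT.
have E : (fun N => series (fun k => (k`!%:R)^-1 *: (A ^+ k)) N *m X)
    = (fun N => X *m series (fun k => (k`!%:R)^-1 *: (B ^+ k)) N).
  apply/funext => N; rewrite /series /= mulmx_suml mulmx_sumr.
  apply: eq_bigr => k _.
  by rewrite -scalemxAl -scalemxAr (mxX_comm _ H).
rewrite E in h1.
move/cvg_lim: h1 => e1; move/cvg_lim: h2 => e2.
by rewrite -e1 // e2.
Qed.

Lemma trmxX n (A : 'M[R]_n) k : (A ^+ k)^T = (A^T) ^+ k.
Proof.
elim: k => [|k IH]; first by rewrite !expr0 trmx1.
by rewrite [in LHS]exprS [in RHS]exprSr -!mulmxE trmx_mul IH.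
Qed.

Lemma expm_tr n (A : 'M[R]_n) : (expm A)^T = expm (A^T).
Proof.
rewrite !expmE; apply/matrixP => i j; rewrite !mxE.
suff -> : ec A^T i j = ec A j i by [].
apply/funext => k; rewrite /ec.
by rewrite -trmxX mxE.
Qed.

Lemma is_derive_mx m n (f : R -> 'M[R]_(m,n)) t (D : 'M[R]_(m,n)) :
  (forall i j, is_derive (t : R) (1 : R) (fun s => f s i j) (D i j)) -> is_derive (t : R) (1 : R) f D.
Proof.
move=> H.
have df : derivable f (t:R) (1:R) by apply/derivable_mxP => i j; case: (H i j).
apply: DeriveDef => //.
rewrite derive_mx //; apply/matrixP => i j; rewrite mxE.
by case: (H i j).
Qed.

Lemma is_derive_entry m n (f : R -> 'M[R]_(m,n)) t (D : 'M[R]_(m,n)) i j :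
  is_derive (t : R) (1 : R) f D -> is_derive (t : R) (1 : R) (fun s => f s i j) (D i j).
Proof.
case=> df <-.
have dij := (derivable_mxP f t (1:R)).1 df i j.
apply: DeriveDef => //.
by rewrite derive_mx // mxE.
Qed.

Lemma is_derive_mulmx m p n (f : R -> 'M[R]_(m,p)) (g : R -> 'M[R]_(p,n)) t df dg :
  is_derive (t : R) (1 : R) f df -> is_derive (t : R) (1 : R) g dg ->
  is_derive (t : R) (1 : R) (fun s => f s *m g s) (df *m g t + f t *m dg).
Proof.
move=> Hf Hg; apply: is_derive_mx => i j.
have -> : (fun s => (f s *m g s) i j) =
    \sum_(l < p) ((fun s => f s i l) * (fun s => g s l j)).
  by apply/funext => s; rewrite mxE fct_sumE.
have -> : (df *m g t + f t *m dg) i j =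
    \sum_(l < p) (f t i l *: dg l j + g t l j *: df i l).
  rewrite !mxE -big_split /=; apply: eq_bigr => l _.
  by change (df i l * g t l j + f t i l * dg l j = f t i l * dg l j + g t l j * df i l); ring.
apply: is_derive_sum => l.
apply: is_deriveM; exact: is_derive_entry.
Qed.

End EXP2.

Section EXP3.
Set Implicit Arguments. Unset Strict Implicit. Unset Printing Implicit Defensive.
Local Open Scope classical_set_scope.
Variable R : realType.

Lemma diffs_entry n (A : 'M[R]_n) (t : R) i j :
  limn (pseries (pseries_diffs (ec A i j)) t) = (A *m expm (t *: A)) i j.
Proof.
apply: cvg_lim => //.
have -> : pseries (pseries_diffs (ec A i j)) t =
    (fun N => \sum_(l < n) A i l * pseries (ec A l j) t N).
  apply/funext => N; rewrite /pseries /series /=.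
  under [RHS]eq_bigr do rewrite mulr_sumr.
  rewrite exchange_big /=; apply: eq_bigr => k _.
  have f : k.+1%:R * (k.+1`!%:R)^-1 = (k`!%:R)^-1 :> R.
    by rewrite factS natrM invfM mulrA mulfV ?mul1r // pnatr_eq0.
  rewrite /pseries_diffs /ec exprS -mulmxE mxE mulrA f mulr_sumr mulr_suml.
  by apply: eq_bigr => l _; ring.
rewrite mxE; apply: cvg_sumR => l; apply: cvgMr.
rewrite expm_entry; exact: (dom_cvg (ecC A) (ec_dom A l j)).
Qed.

Lemma is_derive_expm n (A : 'M[R]_n) (t : R) :
  is_derive t (1 : R) (fun s => expm (s *: A)) (A *m expm (t *: A)).
Proof.
apply: is_derive_mx => i j.
have -> : (fun s => expm (s *: A) i j) = (fun s => limn (pseries (ec A i j) s)).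
  by apply/funext => s; rewrite expm_entry.
rewrite -diffs_entry.
have C0 := ecC A.
apply: (@pseries_snd_diffs _ _ (`|t| + 1)).
- exact: (dom_cvg C0 (ec_dom A i j)).
- exact: (dom_cvg C0 (dom_diffs C0 (ec_dom A i j))).
- exact: (dom_cvg C0 (dom_diffs C0 (dom_diffs C0 (ec_dom A i j)))).
- by rewrite [ltRHS]ger0_norm ?addr_ge0 // ltrDl.
Qed.

Lemma expm_commA n (A : 'M[R]_n) (t : R) : expm (t *: A) *m A = A *m expm (t *: A).
Proof. by apply: expm_comm; rewrite -scalemxAl -scalemxAr. Qed.

Lemma mx_cst m n (f : R -> 'M[R]_(m,n)) x y :
  (forall t, is_derive t (1:R) f 0) -> f x = f y.
Proof.
move=> H; apply/matrixP => i j.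
apply: (@is_derive_0_is_cst _ (fun s => f s i j)) => s.
by have := is_derive_entry i j (H s); rewrite mxE.
Qed.

Lemma expm_inv n (A : 'M[R]_n) (t : R) :
  expm (t *: (- A)) *m expm (t *: A) = 1%:M.
Proof.
have -> : 1%:M = expm (0 *: (- A)) *m expm (0 *: A) by rewrite !scale0r expm0 mulmx1.
apply: (@mx_cst _ _ (fun s => expm (s *: (- A)) *m expm (s *: A))) => s.
have H := is_derive_mulmx (is_derive_expm (- A) s) (is_derive_expm A s).
suff E : - A *m expm (s *: - A) *m expm (s *: A) + expm (s *: - A) *m (A *m expm (s *: A)) = 0.
  by rewrite E in H.
have c : expm (s *: - A) *m A = A *m expm (s *: - A).
  by apply: expm_comm; rewrite -scalemxAl -scalemxAr mulNmx mulmxN.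
by rewrite mulmxA c !mulNmx addNr.
Qed.

Lemma expm_inv' n (A : 'M[R]_n) (t : R) :
  expm (t *: A) *m expm (t *: (- A)) = 1%:M.
Proof. exact: mulmx1C (expm_inv A t). Qed.

End EXP3.

Section EXP4.
Set Implicit Arguments. Unset Strict Implicit. Unset Printing Implicit Defensive.
Local Open Scope classical_set_scope.
Variable R : realType.

Lemma trZ m n (t : R) (A : 'M[R]_(m,n)) : (t *: A)^T = t *: A^T.
Proof. by apply/matrixP => i j; rewrite !mxE. Qed.

Lemma trN m n (A : 'M[R]_(m,n)) : (- A)^T = - A^T.
Proof. by apply/matrixP => i j; rewrite !mxE. Qed.

Lemma tr_expm_skew n (A : 'M[R]_n) t :
  skew_sym A -> (expm (t *: A))^T = expm (t *: - A).
Proof. by move=> HA; rewrite expm_tr trZ HA. Qed.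

Lemma tr_expm_skewN n (A : 'M[R]_n) t :
  skew_sym A -> (expm (t *: - A))^T = expm (t *: A).
Proof. by move=> HA; rewrite expm_tr trZ trN HA opprK. Qed.

Lemma expm_neg n (A : 'M[R]_n) t : expm ((- t) *: A) = expm (t *: - A).
Proof. by rewrite scaleNr scalerN. Qed.

Lemma invmx_expm n (A : 'M[R]_n) t : invmx (expm (t *: A)) = expm (t *: - A).
Proof.
have H := expm_inv' A t.
have u := (mulmx1_unit H).1.
by rewrite -[RHS]mul1mx -(mulVmx u) -mulmxA H mulmx1.
Qed.

Lemma orth_expm n (A : 'M[R]_n) t : skew_sym A -> orth (expm (t *: A)).
Proof. by move=> HA; rewrite /orth tr_expm_skew // expm_inv. Qed.

Lemma orth_mul n (M N : 'M[R]_n) : orth M -> orth N -> orth (M *m N).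
Proof.
rewrite /orth => HM HN.
by rewrite trmx_mul mulmxA -(mulmxA N^T) HM mulmx1 HN.
Qed.

Lemma orth_inv n (M : 'M[R]_n) : orth M -> invmx M = M^T.
Proof.
rewrite /orth => H.
have u := (mulmx1_unit H).2.
by rewrite -[RHS]mul1mx -(mulVmx u) -mulmxA (mulmx1C H) mulmx1.
Qed.

Lemma expm_commZ m n (A : 'M[R]_m) (B : 'M[R]_n) (X : 'M[R]_(m,n)) t :
  A *m X = X *m B -> expm (t *: A) *m X = X *m expm (t *: B).
Proof. by move=> H; apply: expm_comm; rewrite -scalemxAl -scalemxAr H. Qed.

Lemma derive_q n (A B : 'M[R]_n) (t : R) :
  is_derive t (1 : R) (fun s => expm (s *: A) *m expm ((- s) *: B))
    (expm (t *: A) *m expm ((- t) *: B) *m Adm (expm (t *: B)) (A - B)).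
Proof.
have -> : (fun s => expm (s *: A) *m expm ((- s) *: B)) =
          (fun s => expm (s *: A) *m expm (s *: - B)).
  by apply/funext => s; rewrite expm_neg.
have H := is_derive_mulmx (is_derive_expm A t) (is_derive_expm (- B) t).
suff E : A *m expm (t *: A) *m expm (t *: - B) +
   expm (t *: A) *m (- B *m expm (t *: - B)) =
   expm (t *: A) *m expm ((- t) *: B) *m Adm (expm (t *: B)) (A - B).
  by rewrite E in H.
rewrite /Adm invmx_expm expm_neg.
rewrite !mulmxA -(mulmxA _ (expm (t *: - B)) (expm (t *: B))) expm_inv mulmx1.
rewrite -expm_commA mulmxBr mulmxBl.
by rewrite mulmxN mulNmx.
Qed.

End EXP4.

Section EXP5.
Set Implicit Arguments. Unset Strict Implicit. Unset Printing Implicit Defensive.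
Local Open Scope classical_set_scope.
Variable R : realType.

Lemma skewconj m (H N P : 'M[R]_m) :
  H^T = N -> N^T = H -> skew_sym P -> skew_sym (H *m P *m N).
Proof.
move=> a b c; rewrite /skew_sym !trmx_mul a b c.
by rewrite mulNmx mulmxN mulmxA.
Qed.

Lemma trlem m (H P N O : 'M[R]_m) :
  \tr (H *m P *m N *m O) = \tr (P *m (N *m O *m H)).
Proof. by rewrite -!mulmxA mxtrace_mulC !mulmxA. Qed.

Lemma in_p_Ad n k (X : 'M[R]_(n,k)) xh1 xh2 P1 P2 (t : R) :
  in_h X xh1 xh2 -> in_p X P1 P2 ->
  in_p X (Adm (expm (t *: xh1)) P1) (Adm (expm (t *: xh2)) P2).
Proof.
move=> [[s1 s2] hX] [[p1 p2] hp].
rewrite /Adm !invmx_expm.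
have tH1 := tr_expm_skew t s1; have tN1 := tr_expm_skewN t s1.
have tH2 := tr_expm_skew t s2; have tN2 := tr_expm_skewN t s2.
have c1 := expm_commZ t hX.
have hX' : - xh1 *m X = X *m - xh2 by rewrite mulNmx mulmxN hX.
have c2 := expm_commZ t hX'.
split; first by split; apply: skewconj.
move=> O1 P3 [] [so1 so2] hO.
have hh : in_h X (expm (t *: - xh1) *m O1 *m expm (t *: xh1))
                 (expm (t *: - xh2) *m P3 *m expm (t *: xh2)).
  split; first by split; apply: skewconj.
  rewrite -!mulmxA c1 (mulmxA O1 X) hO -(mulmxA X P3) (mulmxA _ X) c2.
  by rewrite -mulmxA.
have := hp _ _ hh.
by rewrite /gip !trlem.
Qed.

End EXP5.

Theorem lemma5p12 (R : realType) (n k : nat) (X : 'M[R]_(n, k))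
    (xi1 : 'M[R]_n) (xi2 : 'M[R]_k) (xh1 : 'M[R]_n) (xh2 : 'M[R]_k) :
  stiefel X ->
  skew_sym xi1 -> skew_sym xi2 ->
  in_h X xh1 xh2 -> in_p X (xi1 - xh1) (xi2 - xh2) ->
  let bhat := fun t : R => iotaX X (expm (t *: xi1)) (expm (t *: xi2)) in
  let q1 := fun t : R => expm (t *: xi1) *m expm ((- t) *: xh1) in
  let q2 := fun t : R => expm (t *: xi2) *m expm ((- t) *: xh2) in
  (forall t : R, bhat t = expm (t *: xi1) *m X *m expm ((- t) *: xi2)) /\
  (q1 0 = 1%:M /\ q2 0 = 1%:M) /\
  horizontal_lift X bhat q1 q2 /\
  (forall t : R,
     derivable q1 t 1 /\ derivable q2 t 1 /\
     derive1 q1 t = q1 t *m Adm (expm (t *: xh1)) (xi1 - xh1) /\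
     derive1 q2 t = q2 t *m Adm (expm (t *: xh2)) (xi2 - xh2)).
Proof.
move=> HX sk1 sk2 hh hp bhat q1 q2.
have [[s1 s2] hX] := hh.
have dq1 : forall t : R, is_derive t (1 : R) q1
    (q1 t *m Adm (expm (t *: xh1)) (xi1 - xh1)) by move=> t; exact: derive_q.
have dq2 : forall t : R, is_derive t (1 : R) q2
    (q2 t *m Adm (expm (t *: xh2)) (xi2 - xh2)) by move=> t; exact: derive_q.
have e1 : forall t : R, derive1 q1 t = q1 t *m Adm (expm (t *: xh1)) (xi1 - xh1).
  by move=> t; rewrite derive1E; case: (dq1 t).
have e2 : forall t : R, derive1 q2 t = q2 t *m Adm (expm (t *: xh2)) (xi2 - xh2).
  by move=> t; rewrite derive1E; case: (dq2 t).
have oq1 : forall t : R, orth (q1 t).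
  by move=> t; apply: orth_mul; apply: orth_expm.
have oq2 : forall t : R, orth (q2 t).
  by move=> t; apply: orth_mul; apply: orth_expm.
have bE : forall t : R, bhat t = expm (t *: xi1) *m X *m expm ((- t) *: xi2).
  by move=> t; rewrite /bhat /iotaX tr_expm_skew // expm_neg.
split; first exact: bE.
split; first by split; rewrite /q1 /q2 oppr0 !scale0r expm0 mulmx1.
split; last first.
  move=> t; split; first by case: (dq1 t).
  split; first by case: (dq2 t).
  by split; [exact: e1 | exact: e2].
split; first by move=> t; split.
split.
  move=> t; rewrite bE /iotaX /q1 /q2.
  have c := expm_commZ (- t) hX.
  have o2 := mulmx1C (orth_expm (- t) s2).
  rewrite trmx_mul -(mulmxA (expm (t *: xi1))) c -!mulmxA.
  rewrite (mulmxA (expm (- t *: xh2))) o2 mul1mx.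
  by rewrite tr_expm_skew // expm_neg mulmxA.
split; first by move=> t; split; [case: (dq1 t) | case: (dq2 t)].
move=> t; rewrite e1 e2 !orth_inv // (mulmxA (q1 t)^T) (oq1 t) (mulmxA (q2 t)^T) (oq2 t) !mul1mx.
exact: in_p_Ad.
Qed.
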